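(* Let $x=(x_1,\ldots,x_n)\in[\ell]^n$ be a minimal non-crossing sequence in which exactly $\ell$ distinct values occur. Then $n\le 4\ell$.
   Context: A sequence $x\in[\ell]^n$ is non-crossing if for all $1\le i<j<k<l\le n$ we have $x_i\ne x_k$, or $x_j\ne x_l$, or $x_i=x_j=x_k=x_l$. It is minimal if there is no index $i$ with $x_i=x_{i+1}=x_{i+2}$. Here $[\ell]=\{1,\ldots,\ell\}$. *)

(* Defs.v *)
From mathcomp Require Import all_boot.
Set Implicit Arguments. Unset Strict Implicit. Unset Printing Implicit Defensive.

(* A sequence x = (x_1,...,x_n) is represented as s : seq nat with
   x_{i+1} = nth 0 s i (0-based positions). *)

Definition in_range (l : nat) (s : seq nat) : Prop :=
  forall i, i < size s -> 1 <= nth 0 s i <= l.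

Definition non_crossing (s : seq nat) : Prop :=
  forall i j k m, i < j -> j < k -> k < m -> m < size s ->
    nth 0 s i <> nth 0 s k \/ nth 0 s j <> nth 0 s m \/
    (nth 0 s i = nth 0 s j /\ nth 0 s j = nth 0 s k /\ nth 0 s k = nth 0 s m).

Definition minimal (s : seq nat) : Prop :=
  forall i, i.+2 < size s ->
    ~ (nth 0 s i = nth 0 s i.+1 /\ nth 0 s i.+1 = nth 0 s i.+2).

(* Main.v *)
Require Import Defs.
From mathcomp Require Import all_boot zify.

Definition Lp (s : seq nat) k := (k < size s) && (nth 0 s k \notin drop k.+1 s).
Definition Fp (s : seq nat) k := (k < size s) && (nth 0 s k \notin take k s).

Lemma count_Lp s : count (Lp s) (iota 0 (size s)) <= size (undup s).
Proof.
rewrite -size_filter.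
set r := filter _ _.
have -> : size r = size (map (nth 0 s) r) by rewrite size_map.
apply: uniq_leq_size.
- have inj : forall i j : nat, i \in r -> j \in r -> nth 0 s i = nth 0 s j -> i = j; last first.
    by rewrite map_inj_in_uniq // filter_uniq // iota_uniq.
  move=> i j; rewrite !mem_filter !mem_iota /Lp /=.
  move=> /andP[/andP[Hi Li] _] /andP[/andP[Hj Lj] _] Eij.
  case: (ltngtP i j) => // h; exfalso.
  + move: Li; rewrite Eij (_ : nth 0 s j = nth 0 (drop i.+1 s) (j - i.+1)).
      by move/negP; apply; apply: mem_nth; rewrite size_drop; apply: ltn_sub2r => //; exact: leq_ltn_trans h _.
    by rewrite nth_drop; congr nth; lia.
  + move: Lj; rewrite -Eij (_ : nth 0 s i = nth 0 (drop j.+1 s) (i - j.+1)).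
      by move/negP; apply; apply: mem_nth; rewrite size_drop; apply: ltn_sub2r => //; exact: leq_ltn_trans h _.
    by rewrite nth_drop; congr nth; lia.
- move=> x /mapP [i]; rewrite mem_filter mem_iota => /andP[/andP[Hi _] _] ->.
  by rewrite mem_undup mem_nth.
Qed.

Lemma count_Fp s : count (Fp s) (iota 0 (size s)) <= size (undup s).
Proof.
rewrite -size_filter.
set r := filter _ _.
have -> : size r = size (map (nth 0 s) r) by rewrite size_map.
apply: uniq_leq_size.
- have inj : forall i j : nat, i \in r -> j \in r -> nth 0 s i = nth 0 s j -> i = j; last first.
    by rewrite map_inj_in_uniq // filter_uniq // iota_uniq.
  move=> i j; rewrite !mem_filter !mem_iota /Fp /=.
  move=> /andP[/andP[Hi Li] _] /andP[/andP[Hj Lj] _] Eij.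
  case: (ltngtP i j) => // h; exfalso.
  + move: Lj; rewrite -Eij -(nth_take 0 h).
    by move/negP; apply; apply: mem_nth; rewrite size_takel //; exact: ltnW.
  + move: Li; rewrite Eij -(nth_take 0 h).
    by move/negP; apply; apply: mem_nth; rewrite size_takel //; exact: ltnW.
- move=> x /mapP [i]; rewrite mem_filter mem_iota => /andP[/andP[Hi _] _] ->.
  by rewrite mem_undup mem_nth.
Qed.

Lemma count_shift (P : nat -> bool) n c :
  (forall k, n <= k -> P k = false) ->
  count (fun i => P (c + i)) (iota 0 n) <= count P (iota 0 n).
Proof.
move=> HP.
have -> : count (fun i => P (c + i)) (iota 0 n) = count P (iota c n).
  rewrite (_ : iota c n = map (addn c) (iota 0 n)); last by rewrite -iotaDl addn0.
  by rewrite count_map.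
have : count P (iota 0 (c + n)) = count P (iota 0 n).
  rewrite addnC iotaD count_cat add0n.
  have -> : count P (iota n c) = 0.
    apply/eqP; rewrite -leqn0 leqNgt -has_count; apply/hasPn => k.
    by rewrite mem_iota => /andP[H _]; rewrite HP.
  by rewrite addn0.
rewrite iotaD count_cat add0n => <-; exact: leq_addl.
Qed.

Lemma size_le4 (r : seq nat) (b1 b2 b3 b4 : pred nat) :
  (forall i, i \in r -> [|| b1 i, b2 i, b3 i | b4 i]) ->
  size r <= count b1 r + count b2 r + count b3 r + count b4 r.
Proof.
elim: r => [|x r IH] //= H.
have := H x (mem_head _ _).
have := IH (fun i Hi => H i (mem_behead (s:=x::r) Hi)).
case: (b1 x); case: (b2 x); case: (b3 x); case: (b4 x) => //= *; lia.
Qed.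

Lemma keyA s j : non_crossing s -> j.+1 < size s -> nth 0 s j != nth 0 s j.+1 ->
  Lp s j || Fp s j.+1.
Proof.
move=> NC Hj Hne; rewrite /Lp /Fp (ltnW Hj) Hj /=.
case: (boolP (nth 0 s j \in drop j.+1 s)) => //= Hin.
apply/negP => Hin2.
move/(nthP 0): Hin => [k' Hk' Ek].
move/(nthP 0): Hin2 => [r' Hr' Er].
rewrite nth_drop in Ek.
rewrite size_drop ltn_subRL in Hk'.
have Hk : j.+1 + k' < size s := Hk'.
rewrite size_takel in Hr'; last exact: ltnW.
rewrite nth_take in Er; last exact Hr'.
have Hr : r' < j.+1 := Hr'.
have Hrj : r' != j by apply: contraNneq Hne => E; rewrite -Er E.
have Hk0 : k' != 0 by apply: contraNneq Hne => E; rewrite -{1}Ek E addn0.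
have [H|[H|[H1 [H2 H3]]]] := NC r' j j.+1 (j.+1 + k') ltac:(lia) ltac:(lia) ltac:(lia) Hk.
- by apply: H.
- by apply: H.
- by rewrite H2 eqxx in Hne.
Qed.

Lemma keyB s j : j < size s -> ~~ (j.+1 < size s) -> Lp s j.
Proof.
move=> Hj H; rewrite /Lp Hj /= drop_oversize //.
by rewrite leqNgt.
Qed.

Theorem lemma3p3 (l : nat) (s : seq nat) :
  in_range l s -> non_crossing s -> minimal s ->
  size (undup s) = l ->
  size s <= 4 * l.
Proof.
move=> _ NC Min <-.
have cover : forall i, i \in iota 0 (size s) ->
    [|| Lp s i, (fun k => Lp s k.+1) i, (fun k => Fp s k.+1) i | (fun k => Fp s k.+2) i].
  move=> i; rewrite mem_iota add0n => /andP[_ Hi] /=.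
  case: (ltnP i.+1 (size s)) => H1; last by rewrite (keyB s i) // -leqNgt.
  case: (eqVneq (nth 0 s i) (nth 0 s i.+1)) => E.
  - case: (ltnP i.+2 (size s)) => H2.
    + have Hne : nth 0 s i.+1 != nth 0 s i.+2.
        by apply/eqP => E2; exact: (Min i H2 (conj E E2)).
      by case/orP: (keyA _ _ NC H2 Hne) => ->; rewrite ?orbT.
    + by rewrite (keyB s i.+1) ?orbT // -leqNgt.
  - by case/orP: (keyA _ _ NC H1 E) => ->; rewrite ?orbT.
have := size_le4 _ (Lp s) (fun k => Lp s k.+1) (fun k => Fp s k.+1) (fun k => Fp s k.+2) cover; rewrite size_iota.
have hL := count_Lp s; have hF := count_Fp s.
have HL : forall k, size s <= k -> Lp s k = false by move=> k H; rewrite /Lp ltnNge H.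
have HF : forall k, size s <= k -> Fp s k = false by move=> k H; rewrite /Fp ltnNge H.
have hL1 : count (fun i => Lp s i.+1) (iota 0 (size s)) <= count (Lp s) (iota 0 (size s))
  := count_shift _ _ 1 HL.
have hF1 : count (fun i => Fp s i.+1) (iota 0 (size s)) <= count (Fp s) (iota 0 (size s))
  := count_shift _ _ 1 HF.
have hF2 : count (fun i => Fp s i.+2) (iota 0 (size s)) <= count (Fp s) (iota 0 (size s))
  := count_shift _ _ 2 HF.
lia.
Qed.
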